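(* Let $A\in\mathbb{C}^{m\times n}$ and $B\in\mathbb{C}^{n\times p}$. Then each of the following sets of matrices is contained in $\{(AB)^{(1,2)}\}$: $$\{(A^{(1,2)}AB)^{(1,2)}A^{(1,2)}\},\quad \{B^{(1,2)}(ABB^{(1,2)})^{(1,2)}\},\quad \{(A^{*}AB)^{(1,2)}A^{*}\},\quad \{B^{*}(ABB^{*})^{(1,2)}\},\quad \{(AA^{*}AB)^{(1,2)}AA^{*}\},$$ $$\{B^{*}B(ABB^{*}B)^{(1,2)}\},\quad \{B^{(1,2)}(A^{(1,2)}ABB^{(1,2)})^{(1,2)}A^{(1,2)}\},\quad \{B^{*}(A^{*}ABB^{*})^{(1,2)}A^{*}\},\quad \{B^{*}B(AA^{*}ABB^{*}B)^{(1,2)}AA^{*}\}.$$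
   Context: For a complex matrix $X$, $X^*$ is its conjugate transpose, $r(X)$ its rank and $\mathscr{R}(X)$ its column space. For $X\in\mathbb{C}^{p\times q}$, a matrix $G\in\mathbb{C}^{q\times p}$ is called an $\{i,\ldots,j\}$-generalized inverse of $X$ (written $X^{(i,\ldots,j)}$) if it satisfies the equations numbered $i,\ldots,j$ among the four Penrose equations (i) $XGX=X$, (ii) $GXG=G$, (iii) $(XG)^*=XG$, (iv) $(GX)^*=GX$; $\{X^{(i,\ldots,j)}\}$ denotes the set of all such $G$. The Moore–Penrose inverse $X^\dagger$ is the unique matrix satisfying all four equations. For a matrix expression involving generalized inverses, $\{\cdot\}$ denotes the set of all values of the expression as each generalized inverse occurring in it ranges over all admissible choices; repeated occurrences of the same symbol (e.g. $A^{(1)}$ appearing twice) denote one and the same choice, and a generalized inverse of a matrix that itself contains a chosen generalized inverse is taken with respect to that chosen matrix. *)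

(* Defs.v *)
(* Complex matrices are modelled over an arbitrary
   numClosedFieldType C (e.g. algC, or any model of the complex numbers),
   with conjugation Num.conj. *)
From HB Require Import structures.
From mathcomp Require Import all_boot all_order all_algebra.
Set Implicit Arguments. Unset Strict Implicit. Unset Printing Implicit Defensive.
Import Order.TTheory GRing.Theory Num.Theory.
Local Open Scope ring_scope.

Definition ctmx (C : numClosedFieldType) (p q : nat) (X : 'M[C]_(p, q)) : 'M[C]_(q, p) :=
  map_mx (fun z => z^*) X^T.

Definition is_g12 (C : numClosedFieldType) (p q : nat)
  (X : 'M[C]_(p, q)) (G : 'M[C]_(q, p)) : Prop :=
  X *m G *m X = X /\ G *m X *m G = G.

(* Main.v *)
Require Import Defs.
From HB Require Import structures.
From mathcomp Require Import all_boot all_order all_algebra.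
Import Order.TTheory GRing.Theory Num.Theory.
Local Open Scope ring_scope.

Section S.
Variable C : numClosedFieldType.

Lemma ctmxK {p q} (M : 'M[C]_(p,q)) : ctmx (ctmx M) = M.
Proof. by apply/matrixP=> i j; rewrite !mxE conjCK. Qed.

Lemma ctmxM p q r (P : 'M[C]_(p,q)) (Q : 'M[C]_(q,r)) :
  ctmx (P *m Q) = ctmx Q *m ctmx P.
Proof. by rewrite /ctmx trmx_mul map_mxM. Qed.

Lemma ctmx_eq0 p q (M : 'M[C]_(p,q)) : ctmx M *m M = 0 -> M = 0.
Proof.
move=> H; apply/matrixP=> i j; rewrite mxE.
have /matrixP/(_ j j) := H; rewrite !mxE => /eqP.
rewrite psumr_eq0; last by move=> k _; rewrite !mxE mulrC mul_conjC_ge0.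
move/allP/(_ i (mem_index_enum _)); rewrite !mxE mulrC mul_conjC_eq0.
by move/eqP.
Qed.

Lemma canL p q r (A : 'M[C]_(p,q)) (Y Z : 'M[C]_(q,r)) :
  ctmx A *m A *m Y = ctmx A *m A *m Z -> A *m Y = A *m Z.
Proof.
move=> H; apply/eqP; rewrite -subr_eq0 -mulmxBr; apply/eqP/ctmx_eq0.
by rewrite ctmxM -mulmxA (mulmxA (ctmx A)) mulmxBr H subrr mulmx0.
Qed.

Lemma ctmx_inj p q : injective (@ctmx C p q).
Proof. by move=> X Y H; rewrite -(ctmxK X) H ctmxK. Qed.

Lemma canR p q r (A : 'M[C]_(q,p)) (Y Z : 'M[C]_(r,q)) :
  Y *m A *m ctmx A = Z *m A *m ctmx A -> Y *m A = Z *m A.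
Proof.
move=> H; apply: ctmx_inj; rewrite !ctmxM; apply: canL.
rewrite ctmxK; have := congr1 (@ctmx C _ _) H; rewrite !ctmxM ctmxK ?mulmxA; exact.
Qed.

Lemma g2 {m n p q} {N : 'M[C]_(m,n)} {U : 'M[C]_(n,p)} {V : 'M[C]_(q,m)} {X : 'M[C]_(p,q)} :
  X *m (V *m N *m U) *m X = X ->
  (U *m X *m V) *m N *m (U *m X *m V) = U *m X *m V.
Proof.
move=> H; transitivity (U *m (X *m (V *m N *m U) *m X) *m V);
  [by rewrite ?mulmxA | by rewrite H].
Qed.
End S.

Theorem theorem3p1 (C : numClosedFieldType) (m n p : nat)
  (A : 'M[C]_(m, n)) (B : 'M[C]_(n, p)) :
  (* 1: (A^(1,2) A B)^(1,2) A^(1,2) *)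
  (forall (A1 : 'M[C]_(n, m)) (X : 'M[C]_(p, n)),
     is_g12 A A1 -> is_g12 (A1 *m A *m B) X ->
     is_g12 (A *m B) (X *m A1)) /\
  (* 2: B^(1,2) (A B B^(1,2))^(1,2) *)
  (forall (B1 : 'M[C]_(p, n)) (X : 'M[C]_(n, m)),
     is_g12 B B1 -> is_g12 (A *m B *m B1) X ->
     is_g12 (A *m B) (B1 *m X)) /\
  (* 3: (A^H A B)^(1,2) A^H *)
  (forall (X : 'M[C]_(p, n)),
     is_g12 (ctmx A *m A *m B) X ->
     is_g12 (A *m B) (X *m ctmx A)) /\
  (* 4: B^H (A B B^H)^(1,2) *)
  (forall (X : 'M[C]_(n, m)),
     is_g12 (A *m B *m ctmx B) X ->
     is_g12 (A *m B) (ctmx B *m X)) /\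
  (* 5: (A A^H A B)^(1,2) A A^H *)
  (forall (X : 'M[C]_(p, m)),
     is_g12 (A *m ctmx A *m A *m B) X ->
     is_g12 (A *m B) (X *m A *m ctmx A)) /\
  (* 6: B^H B (A B B^H B)^(1,2) *)
  (forall (X : 'M[C]_(p, m)),
     is_g12 (A *m B *m ctmx B *m B) X ->
     is_g12 (A *m B) (ctmx B *m B *m X)) /\
  (* 7: B^(1,2) (A^(1,2) A B B^(1,2))^(1,2) A^(1,2) *)
  (forall (A1 : 'M[C]_(n, m)) (B1 : 'M[C]_(p, n)) (X : 'M[C]_(n, n)),
     is_g12 A A1 -> is_g12 B B1 -> is_g12 (A1 *m A *m B *m B1) X ->
     is_g12 (A *m B) (B1 *m X *m A1)) /\
  (* 8: B^H (A^H A B B^H)^(1,2) A^H *)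
  (forall (X : 'M[C]_(n, n)),
     is_g12 (ctmx A *m A *m B *m ctmx B) X ->
     is_g12 (A *m B) (ctmx B *m X *m ctmx A)) /\
  (* 9: B^H B (A A^H A B B^H B)^(1,2) A A^H *)
  (forall (X : 'M[C]_(p, m)),
     is_g12 (A *m ctmx A *m A *m B *m ctmx B *m B) X ->
     is_g12 (A *m B) (ctmx B *m B *m X *m A *m ctmx A)).
Proof.
split.
  move=> A1 X [hA _] [h1 h2]; split.
    have := congr1 (mulmx A) h1; rewrite ?mulmxA hA => ->; by rewrite ?mulmxA.
  have := @g2 C _ _ _ _ (A *m B) (1%:M) (A1) X.
  rewrite ?mulmxA ?mul1mx ?mulmx1 ?mulmxA; apply; rewrite ?mulmxA in h2 *; exact h2.
split.
  move=> B1 X [hB _] [h1 h2]; split.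
    have := congr1 (mulmxr B) h1; rewrite /= -!mulmxA (mulmxA B B1 B) hB => h.
    by rewrite ?mulmxA in h *.
  have := @g2 C _ _ _ _ (A *m B) (B1) (1%:M) X.
  rewrite ?mulmxA ?mul1mx ?mulmx1 ?mulmxA; apply; rewrite ?mulmxA in h2 *; exact h2.
split.
  move=> X [h1 h2]; split.
    rewrite -?mulmxA; apply: canL; by rewrite ?mulmxA in h1 *.
  have := @g2 C _ _ _ _ (A *m B) (1%:M) (ctmx A) X.
  rewrite ?mulmxA ?mul1mx ?mulmx1 ?mulmxA; apply; rewrite ?mulmxA in h2 *; exact h2.
split.
  move=> X [h1 h2]; split.
    rewrite ?mulmxA; apply: canR; by rewrite ?mulmxA in h1 *.
  have := @g2 C _ _ _ _ (A *m B) (ctmx B) (1%:M) X.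
  rewrite ?mulmxA ?mul1mx ?mulmx1 ?mulmxA; apply; rewrite ?mulmxA in h2 *; exact h2.
split.
  move=> X [h1 h2]; split.
    rewrite -?mulmxA; apply: canL; rewrite -?mulmxA; apply: (@canL C _ _ _ (ctmx A)).
    by rewrite ctmxK ?mulmxA in h1 *.
  have := @g2 C _ _ _ _ (A *m B) (1%:M) (A *m ctmx A) X.
  rewrite ?mulmxA ?mul1mx ?mulmx1 ?mulmxA; apply; rewrite ?mulmxA in h2 *; exact h2.
split.
  move=> X [h1 h2]; split.
    rewrite ?mulmxA; apply: canR; apply: (@canR C _ _ _ (ctmx B)).
    by rewrite ctmxK ?mulmxA in h1 *.
  have := @g2 C _ _ _ _ (A *m B) (ctmx B *m B) (1%:M) X.
  rewrite ?mulmxA ?mul1mx ?mulmx1 ?mulmxA; apply; rewrite ?mulmxA in h2 *; exact h2.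
split.
  move=> A1 B1 X [hA _] [hB _] [h1 h2]; split.
    have := congr1 (mulmxr B) (congr1 (mulmx A) h1).
    rewrite /= ?mulmxA hA -!mulmxA (mulmxA B B1 B) hB => h.
    by rewrite ?mulmxA in h *.
  have := @g2 C _ _ _ _ (A *m B) (B1) (A1) X.
  rewrite ?mulmxA ?mul1mx ?mulmx1 ?mulmxA; apply; rewrite ?mulmxA in h2 *; exact h2.
split.
  move=> X [h1 h2]; split.
    rewrite ?mulmxA; apply: canR.
    rewrite -?mulmxA; apply: canL; by rewrite ?mulmxA in h1 *.
  have := @g2 C _ _ _ _ (A *m B) (ctmx B) (ctmx A) X.
  rewrite ?mulmxA ?mul1mx ?mulmx1 ?mulmxA; apply; rewrite ?mulmxA in h2 *; exact h2.
move=> X [h1 h2]; split.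
  rewrite ?mulmxA; apply: canR; apply: (@canR C _ _ _ (ctmx B)); rewrite ctmxK.
  rewrite -?mulmxA; apply: canL; rewrite -?mulmxA; apply: (@canL C _ _ _ (ctmx A)).
  by rewrite ctmxK ?mulmxA in h1 *.
have := @g2 C _ _ _ _ (A *m B) (ctmx B *m B) (A *m ctmx A) X.
rewrite ?mulmxA ?mul1mx ?mulmx1 ?mulmxA; apply; rewrite ?mulmxA in h2 *; exact h2.
Qed.
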